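(* Let $K$ be a field of characteristic $0$, let $S=K[x_1,\ldots,x_n]$ be graded by $\deg x_i=a_i>0$, and let $I,J\subsetneq S$ be graded ideals. Call a graded ideal $\mathfrak a\subset S$ strongly Golod if $\partial(\mathfrak a)^2\subseteq \mathfrak a$, where $\partial(\mathfrak a)$ is the ideal generated by all $\partial f/\partial x_i$ with $f\in\mathfrak a$, $1\le i\le n$. Then: (a) if $I$ and $J$ are strongly Golod, then $I\cap J$ and $IJ$ are strongly Golod; (b) if $I$ and $J$ are strongly Golod and $\partial(I)\partial(J)\subseteq I+J$, then $I+J$ is strongly Golod; (c) if $I$ is strongly Golod, $J$ is arbitrary, and $I:J=I:J^2$, then $I:J$ is strongly Golod; (d) $I^k$, $I^{(k)}$ and $\widetilde{I^k}$ are strongly Golod for all $k\ge 2$.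
   Context: Here $I^{(k)}=\bigcup_{t\ge1} I^k:L^t$, where $L$ is the intersection of all associated, non-minimal prime ideals of $I^k$ (the $k$-th symbolic power), and $\widetilde{I^k}=\bigcup_{t\ge1} I^k:\mathfrak m^t$ where $\mathfrak m=(x_1,\ldots,x_n)$ (the $k$-th saturated power). *)

(* Defs.v *)
From HB Require Import structures.
From mathcomp Require Import all_boot all_order all_algebra.
From mathcomp Require Import mpoly.

Set Implicit Arguments.
Unset Strict Implicit.
Unset Printing Implicit Defensive.

Import GRing.Theory.
Local Open Scope ring_scope.

Section Ideals.
Variables (K : fieldType) (n : nat).
Local Notation S := {mpoly K[n]}.

Definition subsetS (A B : S -> Prop) : Prop := forall f, A f -> B f.

Definition is_ideal (A : S -> Prop) : Prop :=
  [/\ A 0, (forall f g, A f -> A g -> A (f + g)) &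
      (forall r f, A f -> A (r * f))].

Definition proper_ideal (A : S -> Prop) : Prop := is_ideal A /\ ~ A 1.

Definition gen_ideal (P : S -> Prop) : S -> Prop := fun f =>
  exists (m : nat) (r g : nat -> S),
    (forall i, (i < m)%N -> P (g i)) /\ f = \sum_(i < m) r i * g i.

Definition idealI (A B : S -> Prop) : S -> Prop := fun f => A f /\ B f.
Definition idealD (A B : S -> Prop) : S -> Prop :=
  fun f => exists g h, [/\ A g, B h & f = g + h].
Definition idealM (A B : S -> Prop) : S -> Prop :=
  gen_ideal (fun f => exists g h, [/\ A g, B h & f = g * h]).
Definition idealC (A B : S -> Prop) : S -> Prop :=
  fun f => forall g, B g -> A (f * g).
Definition whole : S -> Prop := fun _ => True.
Fixpoint idealX (A : S -> Prop) (k : nat) : S -> Prop :=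
  if k is k'.+1 then idealM (idealX A k') A else whole.

Definition wdeg (a : 'I_n -> nat) (m : 'X_{1..n}) : nat := (\sum_(i < n) a i * m i)%N.
Definition wcomp (a : 'I_n -> nat) (d : nat) (f : S) : S :=
  \sum_(m <- msupp f | wdeg a m == d) f@_m *: 'X_[m].
Definition graded_ideal (a : 'I_n -> nat) (A : S -> Prop) : Prop :=
  is_ideal A /\ forall f d, A f -> A (wcomp a d f).

Definition pderiv_ideal (A : S -> Prop) : S -> Prop :=
  gen_ideal (fun g => exists f i, A f /\ g = mderiv i f).

Definition strongly_Golod (a : 'I_n -> nat) (A : S -> Prop) : Prop :=
  graded_ideal a A /\
  subsetS (idealM (pderiv_ideal A) (pderiv_ideal A)) A.

Definition prime_ideal (P : S -> Prop) : Prop :=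
  proper_ideal P /\ forall f g, P (f * g) -> P f \/ P g.
Definition assoc_prime (A P : S -> Prop) : Prop :=
  prime_ideal P /\ exists h : S, forall g, P g <-> A (g * h).
Definition minimal_prime (A P : S -> Prop) : Prop :=
  [/\ prime_ideal P, subsetS A P &
      forall Q, prime_ideal Q -> subsetS A Q -> subsetS Q P -> subsetS P Q].
Definition embedded_int (A : S -> Prop) : S -> Prop :=
  fun f => forall P, assoc_prime A P -> ~ minimal_prime A P -> P f.

Definition symbolic_power (I : S -> Prop) (k : nat) : S -> Prop :=
  fun f => exists t, (1 <= t)%N /\
    idealC (idealX I k) (idealX (embedded_int (idealX I k)) t) f.

Definition max_ideal : S -> Prop := gen_ideal (fun g => exists i : 'I_n, g = 'X_i).

Definition saturated_power (I : S -> Prop) (k : nat) : S -> Prop :=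
  fun f => exists t, (1 <= t)%N /\ idealC (idealX I k) (idealX max_ideal t) f.

End Ideals.

(* Main.v *)
Require Import Defs.
From HB Require Import structures.
From mathcomp Require Import all_boot all_order all_algebra.
From mathcomp Require Import mpoly.
From mathcomp Require Import ring.
Set Implicit Arguments.
Unset Strict Implicit.
Unset Printing Implicit Defensive.
Import GRing.Theory.
Local Open Scope ring_scope.


Section W.
Variables (K : fieldType) (n : nat) (a : 'I_n -> nat).
Local Notation S := {mpoly K[n]}.
Implicit Types f g h : S.

Lemma wcoef d f m : (wcomp a d f)@_m = if wdeg a m == d then f@_m else 0.
Proof.
rewrite /wcomp raddf_sum /=.
under eq_bigr do rewrite mcoeffZ mcoeffX.
rewrite big_mkcond /=.
case: (boolP (m \in msupp f)) => Hm.
  rewrite (bigD1_seq m) //= ?msupp_uniq // eqxx mulr1 big1 ?addr0 //.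
  move=> k Hk; case: ifP => // _; by rewrite (negPf Hk) mulr0.
rewrite big1_seq; first by rewrite (memN_msupp_eq0 Hm); case: ifP.
move=> k /andP[_ Hk]; case: ifP => // _; case: (eqVneq k m) => [Ek|ne]; last by rewrite mulr0.
by rewrite -Ek Hk in Hm.
Qed.

Lemma wcompD d f g : wcomp a d (f + g) = wcomp a d f + wcomp a d g.
Proof. apply/mpolyP => m; rewrite mcoeffD !wcoef mcoeffD; by case: ifP; rewrite ?addr0. Qed.
Lemma wcomp0 d : wcomp a d (0 : S) = 0.
Proof. apply/mpolyP => m; rewrite wcoef mcoeff0; by case: ifP. Qed.
Lemma wcompN d f : wcomp a d (- f) = - wcomp a d f.
Proof. apply/mpolyP => m; rewrite mcoeffN !wcoef mcoeffN; by case: ifP; rewrite ?oppr0. Qed.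
Lemma wcompB d f g : wcomp a d (f - g) = wcomp a d f - wcomp a d g.
Proof. by rewrite wcompD wcompN. Qed.
Lemma wcomp_sum d (I : Type) (r : seq I) (P : pred I) (F : I -> S) :
  wcomp a d (\sum_(i <- r | P i) F i) = \sum_(i <- r | P i) wcomp a d (F i).
Proof. exact: (big_morph _ (wcompD d) (wcomp0 d)). Qed.

Definition whom d f := wcomp a d f = f.

Lemma homP d f : whom d f -> forall m, wdeg a m != d -> f@_m = 0.
Proof. move=> H m Hm; by rewrite -H wcoef (negPf Hm). Qed.

Lemma hom_wcomp d f : whom d (wcomp a d f).
Proof. rewrite /whom; apply/mpolyP => m; rewrite !wcoef; by case: eqP. Qed.

Lemma wcomp_hom d e f : whom d f -> wcomp a e f = if e == d then f else 0.
Proof.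
move=> H; case: eqP => [->//|/eqP ne]; apply/mpolyP => m.
rewrite wcoef mcoeff0; case: eqP => // E; apply: (homP H); by rewrite E.
Qed.

Lemma wdegD m1 m2 : wdeg a (m1 + m2)%MM = (wdeg a m1 + wdeg a m2)%N.
Proof. rewrite /wdeg -big_split /=; apply: eq_bigr => i _; by rewrite mnmDE mulnDr. Qed.

Definition wb f := (\max_(m <- msupp f) (wdeg a m).+1)%N.

Lemma wb_lt f m : m \in msupp f -> (wdeg a m < wb f)%N.
Proof. move=> H; rewrite /wb (bigD1_seq m) ?msupp_uniq //= leq_max leqnn //. Qed.

Lemma wcomp_big d f : (wb f <= d)%N -> wcomp a d f = 0.
Proof.
move=> H; apply/mpolyP => m; rewrite wcoef mcoeff0; case: eqP => // E.
case: (boolP (m \in msupp f)) => Hm; last exact: memN_msupp_eq0.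
by have := wb_lt Hm; rewrite E ltnNge H.
Qed.

Lemma wdecomp f M : (wb f <= M)%N -> f = \sum_(0 <= x < M) wcomp a x f.
Proof.
move=> H; apply/mpolyP => m; rewrite raddf_sum /=.
under eq_bigr do rewrite wcoef eq_sym.
rewrite -big_mkcond big_nat1_eq /=.
case: (boolP (m \in msupp f)) => Hm; first by rewrite (leq_trans (wb_lt Hm) H).
by case: ifP => //; rewrite (memN_msupp_eq0 Hm).
Qed.

Lemma hom_mul d e f g : whom d f -> whom e g -> whom (d + e) (f * g).
Proof.
move=> Hf Hg; apply/mpolyP => m; rewrite wcoef; case: eqP => // /eqP ne.
rewrite mcoeffM big1 // => k /eqP Ek.
case: (eqVneq (wdeg a k.1) d) => E1; last by rewrite (homP Hf E1) mul0r.
case: (eqVneq (wdeg a k.2) e) => E2; last by rewrite (homP Hg E2) mulr0.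
have E : wdeg a m = (d + e)%N by rewrite Ek wdegD E1 E2.
by rewrite E eqxx in ne.
Qed.

Lemma wcomp_mulhom D e f g : whom e g ->
  wcomp a D (f * g) = if (e <= D)%N then wcomp a (D - e) f * g else 0.
Proof.
move=> Hg; rewrite {1}(wdecomp (M := maxn (wb f) D.+1) (f := f)) ?leq_maxl // mulr_suml.
rewrite wcomp_sum.
under eq_bigr do rewrite (wcomp_hom _ (hom_mul (hom_wcomp _ f) Hg)).
case: leqP => He.
  rewrite (eq_bigr (fun x => if x == (D - e)%N then wcomp a x f * g else 0)).
    rewrite -big_mkcond big_nat1_eq /= ifT //.
    by rewrite (leq_trans _ (leq_maxr _ _)) // ltnS leq_subr.
  move=> x _; congr (if _ then _ else _).
  by apply/eqP/eqP => [->|->]; rewrite ?addnK ?subnK.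
rewrite big1 // => x _; case: eqP => // E.
by move: He; rewrite E ltnNge leq_addl.
Qed.

End W.



Section Id.
Variables (K : fieldType) (n : nat).
Local Notation S := {mpoly K[n]}.
Implicit Types (f g h : S) (A B C P Q : S -> Prop).

Lemma idl0 A : is_ideal A -> A 0. Proof. by case. Qed.
Lemma idlD A f g : is_ideal A -> A f -> A g -> A (f + g). Proof. by case=> _ H _; apply: H. Qed.
Lemma idlM A r f : is_ideal A -> A f -> A (r * f). Proof. by case=> _ _ H; apply: H. Qed.
Lemma idlMr A r f : is_ideal A -> A f -> A (f * r). Proof. by move=> *; rewrite mulrC; apply: idlM. Qed.
Lemma idlN A f : is_ideal A -> A f -> A (- f).
Proof. by move=> *; rewrite -mulN1r; apply: idlM. Qed.
Lemma idlB A f g : is_ideal A -> A f -> A g -> A (f - g).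
Proof. by move=> *; apply: idlD => //; apply: idlN. Qed.
Lemma idl_sum A (I : Type) (r : seq I) (Pr : pred I) (F : I -> S) :
  is_ideal A -> (forall i, Pr i -> A (F i)) -> A (\sum_(i <- r | Pr i) F i).
Proof.
move=> HA HF; apply: (big_ind A (idl0 HA)); [by move=> x y; apply: idlD|exact: HF].
Qed.
Lemma idl_sumord A m (F : 'I_m -> S) :
  is_ideal A -> (forall i, A (F i)) -> A (\sum_(i < m) F i).
Proof. by move=> HA HF; apply: idl_sum. Qed.

Lemma gen_ideal_is P : is_ideal (gen_ideal P).
Proof.
split.
- by exists 0%N, (fun=> 0), (fun=> 0); rewrite big_ord0.
- move=> f g [m1 [r1 [g1 [H1 ->]]]] [m2 [r2 [g2 [H2 ->]]]].
  exists (m1 + m2)%N, (fun i => if (i < m1)%N then r1 i else r2 (i - m1)%N),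
    (fun i => if (i < m1)%N then g1 i else g2 (i - m1)%N); split.
    move=> i Hi; case: ifP => Hi1; first exact: H1.
    by apply: H2; rewrite ltn_subLR // leqNgt Hi1.
  rewrite big_split_ord /=; congr (_ + _); apply: eq_bigr => i _ /=.
    by rewrite ltn_ord.
  by rewrite ltnNge leq_addr /= addKn.
- move=> r f [m [r1 [g1 [H1 ->]]]]; exists m, (fun i => r * r1 i), g1; split => //.
  by rewrite mulr_sumr; apply: eq_bigr => i _; rewrite mulrA.
Qed.

Lemma gen_sub P f : P f -> gen_ideal P f.
Proof.
by move=> H; exists 1%N, (fun=> 1), (fun=> f); split => [i|]; rewrite ?big_ord1 ?mul1r.
Qed.

Lemma gen_min P B : is_ideal B -> (forall f, P f -> B f) -> forall f, gen_ideal P f -> B f.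
Proof.
move=> HB HP f [m [r [g [Hg ->]]]]; apply: idl_sumord => // i.
by apply: idlM => //; apply: HP; apply: Hg.
Qed.

Lemma gen_mulr P C y x : is_ideal C -> (forall p, P p -> C (p * y)) ->
  gen_ideal P x -> C (x * y).
Proof.
move=> HC HP [m [r [g [Hg ->]]]]; rewrite mulr_suml; apply: idl_sumord => // i.
by rewrite -mulrA; apply: idlM => //; apply: HP; apply: Hg.
Qed.

Lemma gen_mul2 P Q C x y : is_ideal C -> (forall p q, P p -> Q q -> C (p * q)) ->
  gen_ideal P x -> gen_ideal Q y -> C (x * y).
Proof.
move=> HC H Hx Hy; apply: (gen_mulr HC _ Hx) => p Hp; rewrite mulrC.
by apply: (gen_mulr HC _ Hy) => q Hq; rewrite mulrC; apply: H.
Qed.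

Lemma idealM_is A B : is_ideal (idealM A B). Proof. exact: gen_ideal_is. Qed.
Lemma idealM_mem A B g h : A g -> B h -> idealM A B (g * h).
Proof. by move=> *; apply: gen_sub; exists g, h. Qed.
Lemma idealM_min A B C : is_ideal C -> (forall g h, A g -> B h -> C (g * h)) ->
  forall f, idealM A B f -> C f.
Proof. by move=> HC H; apply: gen_min => // f [g [h [Hg Hh ->]]]; apply: H. Qed.

Lemma whole_is : is_ideal (@whole K n). Proof. by []. Qed.
Lemma idealX_is A k : is_ideal A -> is_ideal (idealX A k).
Proof. by case: k => [|k] _ /=; [exact: whole_is|apply: idealM_is]. Qed.
Lemma idealI_is A B : is_ideal A -> is_ideal B -> is_ideal (idealI A B).
Proof.
move=> HA HB; split; first by split; apply: idl0.
- by move=> f g [? ?] [? ?]; split; apply: idlD.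
- by move=> r f [? ?]; split; apply: idlM.
Qed.
Lemma idealD_is A B : is_ideal A -> is_ideal B -> is_ideal (idealD A B).
Proof.
move=> HA HB; split; first by exists 0, 0; rewrite addr0; split => //; apply: idl0.
- move=> f g [f1 [f2 [H1 H2 ->]]] [g1 [g2 [H3 H4 ->]]].
  exists (f1 + g1), (f2 + g2); split; [exact: idlD|exact: idlD|by rewrite addrACA].
- move=> r f [f1 [f2 [H1 H2 ->]]]; exists (r * f1), (r * f2); split; [exact: idlM|exact: idlM|by rewrite mulrDr].
Qed.
Lemma idealC_is A B : is_ideal A -> is_ideal (idealC A B).
Proof.
move=> HA; split.
- by move=> g _; rewrite mul0r; apply: idl0.
- by move=> f g Hf Hg h Hh; rewrite mulrDl; apply: idlD => //; [apply: Hf|apply: Hg].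
- by move=> r f Hf h Hh; rewrite -mulrA; apply: idlM => //; apply: Hf.
Qed.

Lemma idl_mulx A x : is_ideal A -> is_ideal (fun y => A (x * y)).
Proof.
move=> HA; split; first by rewrite mulr0; apply: idl0.
  by move=> f g *; rewrite mulrDr; apply: idlD.
by move=> r f *; rewrite mulrCA; apply: idlM.
Qed.

Lemma pow_mul A x y a b : is_ideal A -> idealX A a x -> idealX A b y ->
  idealX A (a + b) (x * y).
Proof.
move=> HA; elim: b y => [|b IH] y Hx Hy.
  by rewrite addn0; apply: idlMr => //; apply: idealX_is.
rewrite addnS /=; move: Hy => /= Hy.
apply: (idealM_min (idl_mulx x (idealM_is _ _)) _ Hy) => //= p q Hp Hq.
by rewrite mulrA; apply: idealM_mem => //; apply: IH.
Qed.

Lemma pow_succ A k f : is_ideal A -> idealX A k.+1 f -> idealX A k f.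
Proof.
move=> HA /= H; apply: (idealM_min (idealX_is k HA) _ H) => p q Hp Hq.
by apply: idlMr => //; apply: idealX_is.
Qed.

Lemma pow_anti A k m f : is_ideal A -> (k <= m)%N -> idealX A m f -> idealX A k f.
Proof.
move=> HA; elim: m => [|m IH]; first by rewrite leqn0 => /eqP ->.
rewrite leq_eqVlt => /orP[/eqP -> //|]; rewrite ltnS => Hk H.
by apply: IH => //; apply: pow_succ.
Qed.

Lemma pow1 A f : is_ideal A -> A f -> idealX A 1 f.
Proof. by move=> HA H; rewrite -[f]mul1r; apply: idealM_mem. Qed.

Lemma colon_split A L x a b : is_ideal A -> is_ideal L ->
  (forall u v, idealX L a u -> idealX L b v -> A (x * (u * v))) ->
  idealC A (idealX L (a + b)) x.
Proof.
move=> HA HL; elim: b x => [|b IH] x H y.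
  by rewrite addn0 => Hy; move: (H y 1 Hy I); rewrite mulr1.
rewrite addnS /= => Hy.
apply: (idealM_min (idl_mulx x HA) _ Hy) => p q Hp Hq /=.
rewrite mulrA mulrAC.
apply: (IH (x * q)) => // u v Hu Hv.
have -> : x * q * (u * v) = x * (u * (v * q)) by ring.
by apply: H => //; apply: idealM_mem.
Qed.

End Id.



Section G.
Variables (K : fieldType) (n : nat) (a : 'I_n -> nat).
Local Notation S := {mpoly K[n]}.
Implicit Types (f g h : S) (A B C P Q : S -> Prop).

Lemma wcomp_mul_gen C d g h : is_ideal C ->
  (forall x y, C (wcomp a x g * wcomp a y h)) -> C (wcomp a d (g * h)).
Proof.
move=> HC H.
have -> : g * h = \sum_(0 <= y < wb a h) g * wcomp a y h by rewrite -mulr_sumr -wdecomp.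
rewrite wcomp_sum; apply: idl_sum => // y _.
rewrite (wcomp_mulhom _ _ (hom_wcomp a y h)); case: ifP => _; last exact: idl0.
exact: H.
Qed.

Lemma wcomp_mul_mem C d r g : is_ideal C ->
  (forall y, C (wcomp a y g)) -> C (wcomp a d (r * g)).
Proof. by move=> HC H; apply: wcomp_mul_gen => // x y; apply: idlM. Qed.

Lemma graded_gen P : (forall p d, P p -> gen_ideal P (wcomp a d p)) ->
  graded_ideal a (gen_ideal P).
Proof.
move=> H; split; first exact: gen_ideal_is.
move=> f d [m [r [g [Hg ->]]]]; rewrite wcomp_sum; apply: idl_sumord.
  exact: gen_ideal_is.
by move=> i; apply: wcomp_mul_mem; [exact: gen_ideal_is|move=> y; apply: H; apply: Hg].
Qed.

Lemma graded_idealM A B : graded_ideal a A -> graded_ideal a B -> graded_ideal a (idealM A B).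
Proof.
move=> [HA GA] [HB GB]; apply: graded_gen => p d [g [h [Hg Hh ->]]].
apply: wcomp_mul_gen; first exact: gen_ideal_is.
by move=> x y; apply: idealM_mem; [apply: GA|apply: GB].
Qed.

Lemma graded_whole : graded_ideal a (@whole K n). Proof. by []. Qed.

Lemma graded_idealX A k : graded_ideal a A -> graded_ideal a (idealX A k).
Proof.
move=> GA; elim: k => [|k IH] /=; first exact: graded_whole.
exact: graded_idealM.
Qed.

Lemma graded_idealI A B : graded_ideal a A -> graded_ideal a B -> graded_ideal a (idealI A B).
Proof.
move=> [HA GA] [HB GB]; split; first exact: idealI_is.
by move=> f d [? ?]; split; [apply: GA|apply: GB].
Qed.

Lemma graded_idealD A B : graded_ideal a A -> graded_ideal a B -> graded_ideal a (idealD A B).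
Proof.
move=> [HA GA] [HB GB]; split; first exact: idealD_is.
move=> f d [g [h [Hg Hh ->]]]; exists (wcomp a d g), (wcomp a d h); split.
- exact: GA.
- exact: GB.
- exact: wcompD.
Qed.

Lemma graded_idealC A B : graded_ideal a A -> graded_ideal a B -> graded_ideal a (idealC A B).
Proof.
move=> [HA GA] [HB GB]; split; first exact: idealC_is.
move=> f d Hf h Hh.
have -> : wcomp a d f * h = \sum_(0 <= y < wb a h) wcomp a d f * wcomp a y h
  by rewrite -mulr_sumr -wdecomp.
apply: idl_sum => // y _.
have := wcomp_mulhom (d + y) f (hom_wcomp a y h); rewrite leq_addl addnK => <-.
by apply: GA; apply: Hf; apply: GB.
Qed.

End G.



Section SG.
Variables (K : fieldType) (n : nat) (a : 'I_n -> nat).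
Local Notation S := {mpoly K[n]}.
Implicit Types (f g h : S) (A B C P Q I J L : S -> Prop).
Local Notation "p ^`M ( i )" := (mderiv i p).

Definition SGe A := forall f g i j, A f -> A g -> A (f^`M(i) * g^`M(j)).

Lemma memeq A x y : x = y -> A y -> A x. Proof. by move->. Qed.

Lemma SG_of A : graded_ideal a A -> SGe A -> strongly_Golod a A.
Proof.
move=> [HA GA] H; split => //; apply: idealM_min => // x y Hx Hy.
apply: (gen_mul2 HA _ Hx Hy) => p q [f [i [Hf ->]]] [g [j [Hg ->]]].
exact: H.
Qed.

Lemma SG_to A : strongly_Golod a A -> SGe A.
Proof.
move=> [_ H] f g i j Hf Hg; apply: H; apply: idealM_mem; apply: gen_sub.
  by exists f, i.
by exists g, j.
Qed.

Lemma SG_gen P C f g i j : is_ideal C ->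
  (forall r s p q, P p -> P q -> C ((r * p)^`M(i) * (s * q)^`M(j))) ->
  gen_ideal P f -> gen_ideal P g -> C (f^`M(i) * g^`M(j)).
Proof.
move=> HC H [m [r [p [Hp ->]]]] [m' [s [q [Hq ->]]]].
rewrite !raddf_sum mulr_suml; apply: idl_sumord => // k.
rewrite mulr_sumr; apply: idl_sumord => // l.
by apply: H; [apply: Hp|apply: Hq].
Qed.

Lemma SGe_I I J : SGe I -> SGe J -> SGe (idealI I J).
Proof. by move=> HI HJ f g i j [? ?] [? ?]; split; [apply: HI|apply: HJ]. Qed.

Lemma SGe_M I J : is_ideal I -> is_ideal J -> SGe I -> SGe J -> SGe (idealM I J).
Proof.
move=> HI HJ SI SJ f f' i j; apply: SG_gen; first exact: idealM_is.
move=> r s p q [g [h [Hg Hh ->]]] [g2 [h2 [Hg2 Hh2 ->]]].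
have M : forall c X Y, I X -> J Y -> idealM I J (c * X * Y).
  by move=> c X Y HX HY; rewrite -mulrA; apply: idlM; [apply: idealM_is|apply: idealM_mem].
set dr := r^`M(i); set ds := s^`M(j).
set dg := g^`M(i); set dh := h^`M(i); set dg2 := g2^`M(j); set dh2 := h2^`M(j).
have E1 : (r * (g * h))^`M(i) = dr * (g * h) + (r * h) * dg + (r * g) * dh.
  by rewrite !mderivM; rewrite -/dr -/dg -/dh; ring.
have E2 : (s * (g2 * h2))^`M(j) = ds * (g2 * h2) + (s * h2) * dg2 + (s * g2) * dh2.
  by rewrite !mderivM; rewrite -/ds -/dg2 -/dh2; ring.
rewrite E1 E2.
apply: (memeq (y :=
  (dr * (ds * (g2 * h2))) * g * h + (dr * s * h2 * dg2) * g * h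
  + (dr * s * g2 * dh2) * g * h + (r * h * dg * ds) * g2 * h2
  + (r * s * h2) * (dg * dg2) * h + (r * dg * s * dh2) * g2 * h
  + (r * g * dh * ds) * g2 * h2 + (r * dh * s * dg2) * g * h2
  + (r * s * g2 * g) * (dh * dh2) )).
  ring.
have HT := idealM_is I J.
repeat apply: idlD => //; apply: M => //; first [exact: SI | exact: SJ].
Qed.

Lemma SGe_D I J : is_ideal I -> is_ideal J -> SGe I -> SGe J ->
  subsetS (idealM (pderiv_ideal I) (pderiv_ideal J)) (idealD I J) -> SGe (idealD I J).
Proof.
move=> HI HJ SI SJ H f f' i j [g1 [h1 [H1 H2 ->]]] [g2 [h2 [H3 H4 ->]]].
have HD := idealD_is HI HJ.
have inI : forall x, I x -> idealD I J x.
  by move=> x Hx; exists x, 0; split => //; [apply: idl0|rewrite addr0].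
have inJ : forall x, J x -> idealD I J x.
  by move=> x Hx; exists 0, x; split => //; [apply: idl0|rewrite add0r].
have P : forall g h i j, I g -> J h -> idealD I J (g^`M(i) * h^`M(j)).
  move=> g h i' j' Hg Hh; apply: H; apply: idealM_mem; apply: gen_sub.
    by exists g, i'.
  by exists h, j'.
rewrite !mderivD !mulrDl !mulrDr.
apply: idlD => //; apply: idlD => //.
- by apply: inI; apply: SI.
- exact: P.
- by rewrite mulrC; apply: P.
- by apply: inJ; apply: SJ.
Qed.

Lemma key A f h g1 g2 g3 g4 i j : is_ideal A -> SGe A ->
  A (f * g1) -> A (f * g2) -> A (h * g3) -> A (h * g4) ->
  A (f^`M(i) * h^`M(j) * (g1 * g2 * (g3 * g4))).
Proof.
move=> HA SA F1 F2 H3 H4.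
have E : forall f g1 g2 i, A (f * g1) -> A (f * g2) ->
    exists e, A e /\ (f * (g1 * g2))^`M(i) = f^`M(i) * (g1 * g2) + e.
  move=> f0 u v k Hu Hv; exists ((f0 * v) * u^`M(k) + (f0 * u) * v^`M(k)); split.
    by apply: idlD => //; apply: idlMr.
  by rewrite !mderivM; ring.
have [e [He Ef]] := E f g1 g2 i F1 F2.
have [e' [He' Eh]] := E h g3 g4 j H3 H4.
have Af : A (f * (g1 * g2)) by rewrite mulrA; apply: idlMr.
have Ah : A (h * (g3 * g4)) by rewrite mulrA; apply: idlMr.
have := SA _ _ i j Af Ah; rewrite Ef Eh => HP.
set X := f^`M(i) * (g1 * g2); set Y := h^`M(j) * (g3 * g4).
apply: (memeq (y := (X + e) * (Y + e') - (X * e' + e * Y + e * e'))).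
  rewrite /X /Y; ring.
apply: idlB => //; apply: idlD => //; [apply: idlD => //|]; 
  first [by apply: idlM | by apply: idlMr].
Qed.

Lemma pow1_sub J f : is_ideal J -> idealX J 1 f -> J f.
Proof. by move=> HJ /= H; apply: (idealM_min HJ _ H) => g h _ Hh; apply: idlM. Qed.

Lemma red I J (Hc : forall f, idealC I J f <-> idealC I (idealX J 2) f) x :
  is_ideal I -> is_ideal J ->
  (forall g1 g2, J g1 -> J g2 -> I (x * (g1 * g2))) -> idealC I J x.
Proof.
move=> HI HJ H; apply/Hc.
have := @colon_split _ _ I J x 1 1 HI HJ; apply => u v Hu Hv.
by apply: H; apply: pow1_sub.
Qed.

Lemma SGe_C I J : is_ideal I -> is_ideal J -> SGe I ->
  (forall f, idealC I J f <-> idealC I (idealX J 2) f) -> SGe (idealC I J).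
Proof.
move=> HI HJ SI Hc f h i j Hf Hh.
set x := f^`M(i) * h^`M(j).
have H4 : forall g1 g2 g3 g4, J g1 -> J g2 -> J g3 -> J g4 ->
    I (x * (g1 * g2 * (g3 * g4))).
  move=> g1 g2 g3 g4 J1 J2 J3 J4; rewrite /x.
  by apply: (key i j HI SI); [apply: Hf|apply: Hf|apply: Hh|apply: Hh].
have H3 : forall g1 g3 g4, J g1 -> J g3 -> J g4 -> I (x * g1 * (g3 * g4)).
  move=> g1 g3 g4 J1 J3 J4.
  apply: (memeq (y := x * (g3 * g4) * g1)); first ring.
  apply: (red Hc HI HJ (x := x * (g3 * g4))) J1 => u v Hu Hv.
  by apply: (memeq (y := x * (u * v * (g3 * g4)))); [ring | apply: H4].
have H2 : forall g1 g3, J g1 -> J g3 -> I (x * (g1 * g3)).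
  move=> g1 g3 J1 J3.
  apply: (memeq (y := x * g1 * g3)); first ring.
  apply: (red Hc HI HJ (x := x * g1)) J3 => u v Hu Hv.
  by apply: (memeq (y := x * g1 * (u * v))); [ring | apply: H3].
by apply: red.
Qed.

Lemma deriv_pow I k f i : is_ideal I -> idealX I k.+1 f -> idealX I k (f^`M(i)).
Proof.
move=> HI; elim: k f => [|k IH] f; first by [].
move=> Hf; move: (Hf) => [m [r [p [Hp ->]]]].
have HK := idealX_is k.+1 HI.
rewrite (big_morph _ (mderivD i) (mderiv0 _ i)); apply: idl_sumord => // l.
have [u [v [Hu Hv ->]]] := Hp l (ltn_ord l).
rewrite !mderivM.
apply: idlD => //.
  by apply: idlM => //; apply: (pow_succ HI); exact: (@idealM_mem _ _ (idealX I k.+1) I u v Hu Hv).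
apply: idlM => //; apply: idlD => //.
  have := pow_mul HI (IH _ Hu) (pow1 HI Hv); rewrite addn1; exact.
by apply: idlMr.
Qed.

Lemma SGe_X I k : is_ideal I -> (2 <= k)%N -> SGe (idealX I k).
Proof.
move=> HI Hk f g i j Hf Hg.
case: k Hk Hf Hg => [|k] // Hk Hf Hg.
apply: (pow_anti (m := k + k)) => //; first by case: k Hk {Hf Hg} => // k _; rewrite addnS ltnS leq_addr.
by apply: pow_mul => //; apply: deriv_pow.
Qed.

End SG.



Section Sat.
Variables (K : fieldType) (n : nat) (a : 'I_n -> nat).
Local Notation S := {mpoly K[n]}.
Implicit Types (f g h : S) (A B C P Q I J L : S -> Prop).
Local Notation "p ^`M ( i )" := (mderiv i p).

Definition Sat A L : S -> Prop :=
  fun f => exists t, (1 <= t)%N /\ idealC A (idealX L t) f.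

Lemma colon_anti A L s t f : is_ideal L -> (s <= t)%N ->
  idealC A (idealX L s) f -> idealC A (idealX L t) f.
Proof. by move=> HL Hst H y Hy; apply: H; apply: (pow_anti HL Hst). Qed.

Lemma Sat_is A L : is_ideal A -> is_ideal L -> is_ideal (Sat A L).
Proof.
move=> HA HL; split.
- by exists 1%N; split => //; apply: idl0; apply: idealC_is.
- move=> f g [s [Hs Hf]] [t [Ht Hg]]; exists (s + t)%N; split.
    by rewrite (leq_trans Hs) ?leq_addr.
  apply: (idlD (idealC_is _ HA)).
    by apply: (colon_anti HL _ Hf); rewrite leq_addr.
  by apply: (colon_anti HL _ Hg); rewrite leq_addl.
- move=> r f [t [Ht Hf]]; exists t; split => //; exact: (idlM _ (idealC_is _ HA)).
Qed.

Lemma Sat_graded A L : graded_ideal a A -> graded_ideal a L -> graded_ideal a (Sat A L).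
Proof.
move=> GA GL; split; first exact: Sat_is (proj1 GA) (proj1 GL).
move=> f d [t [Ht Hf]]; exists t; split => //.
have [_ G] := graded_idealC GA (graded_idealX t GL); exact: G.
Qed.

Lemma Sat_SGe A L : is_ideal A -> is_ideal L -> SGe A -> SGe (Sat A L).
Proof.
move=> HA HL SA f h i j [s [Hs Hf]] [t [Ht Hh]].
set x := f^`M(i) * h^`M(j).
exists ((s + s) + (t + t))%N; split; first by rewrite (leq_trans Hs) // -!addnA leq_addr.
apply: colon_split => // u v Hu Hv.
apply: (memeq (y := x * v * u)); first ring.
apply: (@colon_split _ _ A L (x * v) s s HA HL _ u Hu).
move=> g1 g2 H1 H2.
apply: (memeq (y := x * (g1 * g2) * v)); first ring.
apply: (@colon_split _ _ A L (x * (g1 * g2)) t t HA HL _ v Hv).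
move=> g3 g4 H3 H4.
rewrite -mulrA /x.
by apply: (key i j HA SA); [apply: Hf|apply: Hf|apply: Hh|apply: Hh].
Qed.

Lemma wcompX d m : wcomp a d ('X_[m] : S) = if wdeg a m == d then 'X_[m] else 0.
Proof.
apply/mpolyP => k; rewrite wcoef mcoeffX.
case: (eqVneq m k) => [->|ne]; first by case: ifP; rewrite ?mcoeff0 ?mcoeffX ?eqxx.
by case: ifP; case: ifP => //; rewrite ?mcoeff0 ?mcoeffX ?(negPf ne).
Qed.

Lemma max_graded : graded_ideal a (@max_ideal K n).
Proof.
apply: graded_gen => p d [i ->].
rewrite wcompX; case: ifP => _; first by apply: gen_sub; exists i.
by apply: idl0; apply: gen_ideal_is.
Qed.

End Sat.



Section Prime.
Variables (K : fieldType) (n : nat) (a : 'I_n -> nat).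
Local Notation S := {mpoly K[n]}.
Implicit Types (f g h : S) (A B C P Q I J L : S -> Prop).

Lemma wb_le f N : (forall x, (N <= x)%N -> wcomp a x f = 0) -> (wb a f <= N)%N.
Proof.
move=> H; apply/bigmax_leqP_seq => m Hm _; rewrite ltnNge; apply/negP => Hle.
have := H _ Hle; move/(congr1 (mcoeff m)); rewrite wcoef eqxx mcoeff0 => /eqP.
by rewrite mcoeff_eq0 Hm.
Qed.

Lemma prime_pow P x k : prime_ideal P -> P (x ^+ k) -> P x.
Proof.
move=> [[HP N1] PP]; elim: k => [|k IH]; first by rewrite expr0 => /N1.
by rewrite exprS => /PP [] // /IH.
Qed.

Lemma assoc_graded A P h : graded_ideal a A -> prime_ideal P ->
  (forall g, P g <-> A (g * h)) -> forall f d, P f -> P (wcomp a d f).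
Proof.
move=> [HA GA] PrP Ph.
have HP := proj1 (proj1 PrP).
suff Q : forall N f, P f -> (wb a f <= N)%N -> forall d, P (wcomp a d f).
  by move=> f d Hf; apply: (Q _ f Hf (leqnn _)).
elim=> [|N IHN] f Hf Hb d.
  by rewrite (wdecomp Hb) big_geq // wcomp0; apply: idl0.
set fN := wcomp a N f; set f' := f - fN.
have HfN : whom a N fN by apply: hom_wcomp.
have cf' : forall x, (N <= x)%N -> wcomp a x f' = 0.
  move=> x Hx; rewrite wcompB (wcomp_hom _ HfN).
  case: eqP => [->|/eqP ne]; first by rewrite subrr.
  rewrite wcomp_big ?subr0 //; apply: leq_trans Hb _.
  by rewrite ltn_neqAle eq_sym ne Hx.
suff PfN : P fN.
  have Pf' : P f' by apply: idlB.
  have := IHN f' Pf' (wb_le cf') d => H.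
  have -> : wcomp a d f = wcomp a d f' + wcomp a d fN by rewrite -wcompD subrK.
  apply: idlD => //; rewrite (wcomp_hom _ HfN); case: ifP => _ //; exact: idl0.
set B := wb a h.
have Afh : A (f * h) by apply/Ph.
have main : forall k e, (B <= e + k)%N -> A (fN ^+ (B - e) * wcomp a e h).
  elim=> [|k IHk] e Hk.
    by rewrite addn0 in Hk; rewrite (wcomp_big Hk) mulr0; apply: idl0.
  case: (leqP B (e + k)) => Hk'; first exact: IHk.
  have EB : B = (e + k).+1 by apply/eqP; rewrite eqn_leq Hk' -addnS Hk.
  have HNe := GA _ (N + e)%N Afh.
  have E1 : wcomp a (N + e) (fN * h) = wcomp a e h * fN.
    by rewrite mulrC (wcomp_mulhom _ _ HfN) leq_addr addKn.
  have Ef : f = fN + f' by rewrite /f' addrC subrK.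
  rewrite Ef mulrDl wcompD E1 in HNe.
  have -> : (B - e = k.+1)%N by rewrite EB -addnS addKn.
  set T := wcomp a (N + e) (f' * h) in HNe.
  have AT : A (fN ^+ k * T).
    have -> : T = \sum_(0 <= y < B) wcomp a (N + e) (f' * wcomp a y h).
      by rewrite /T {1}(wdecomp (leqnn B)) mulr_sumr wcomp_sum.
    rewrite mulr_sumr; apply: idl_sum => // y _.
    rewrite (wcomp_mulhom _ _ (hom_wcomp a y h)).
    case: ifP => Hy; last by rewrite mulr0; exact: (idl0 HA).
    case: (leqP y e) => Hye.
      rewrite cf' ?mul0r ?mulr0; first exact: (idl0 HA).
      by rewrite -addnBA ?leq_addr.
    case: (leqP B y) => HBy.
      by rewrite (wcomp_big HBy) !mulr0; exact: (idl0 HA).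
    have Hyk : (B <= y + k)%N by rewrite EB -addSn leq_add2r.
    have := IHk y Hyk => Hy'.
    have Ek : k = ((B - y) + (k - (B - y)))%N.
      by rewrite subnKC // leq_subLR.
    rewrite Ek exprD.
    move: (fN ^+ (B - y)) (fN ^+ (k - (B - y))) Hy' => X1 X2 Hy'.
    move: (wcomp a (N + e - y) f') (wcomp a y h) Hy' => Z1 Z2 Hy'.
    apply: (memeq (y := (X2 * Z1) * (X1 * Z2))); first ring.
    by apply: idlM.
  apply: (memeq (y := fN ^+ k * (wcomp a e h * fN + T) - fN ^+ k * T)).
    rewrite exprSr; clear -fN T; move: (fN ^+ k) T (wcomp a e h) => X1 X2 X3; ring.
  by apply: idlB => //; apply: idlM.
have : A (fN ^+ B * h).
  rewrite [X in _ * X](wdecomp (leqnn B)) mulr_sumr big_nat_cond.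
  apply: idl_sum => // e /andP[/andP[_ He] _].
  have He' : (e <= B)%N by apply: ltnW.
  rewrite -{1}(subnKC He') exprD -mulrA; apply: idlM => //; apply: (main B) => //.
  by rewrite addnC leq_addr.
move/Ph; exact: prime_pow.
Qed.

Lemma embedded_graded A : graded_ideal a A -> graded_ideal a (embedded_int A).
Proof.
move=> GA; split.
  split.
  - by move=> P [[[HP _] _] _] _; apply: idl0.
  - by move=> f g Hf Hg P HaP Hm; have [[[HP _] _] _] := HaP; apply: idlD => //; [apply: Hf|apply: Hg].
  - by move=> r f Hf P HaP Hm; have [[[HP _] _] _] := HaP; apply: idlM => //; apply: Hf.
move=> f d Hf P HaP Hm; have [PrP [h Hh]] := HaP.
by apply: (assoc_graded GA PrP Hh); apply: Hf.
Qed.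

End Prime.

Theorem theorem2p1 (K : fieldType) (n : nat) (a : 'I_n -> nat)
  (I J : {mpoly K[n]} -> Prop) :
  [pchar K] =i pred0 ->
  (forall i, (0 < a i)%N) ->
  graded_ideal a I -> ~ I 1 ->
  graded_ideal a J -> ~ J 1 ->
  [/\ (strongly_Golod a I -> strongly_Golod a J ->
         strongly_Golod a (idealI I J) /\ strongly_Golod a (idealM I J)),
      (strongly_Golod a I -> strongly_Golod a J ->
         subsetS (idealM (pderiv_ideal I) (pderiv_ideal J)) (idealD I J) ->
         strongly_Golod a (idealD I J)),
      (strongly_Golod a I ->
         (forall f, idealC I J f <-> idealC I (idealX J 2) f) ->
         strongly_Golod a (idealC I J)) &
      (forall k, (2 <= k)%N ->
         [/\ strongly_Golod a (idealX I k),
             strongly_Golod a (symbolic_power I k) &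
             strongly_Golod a (saturated_power I k)])].
Proof.
move=> _ _ GI _ GJ _.
have HI := proj1 GI; have HJ := proj1 GJ.
split.
- move=> SI SJ; split.
    exact: (SG_of (graded_idealI GI GJ) (SGe_I (SG_to SI) (SG_to SJ))).
  exact: (SG_of (graded_idealM GI GJ) (SGe_M HI HJ (SG_to SI) (SG_to SJ))).
- move=> SI SJ H.
  exact: (SG_of (graded_idealD GI GJ) (SGe_D HI HJ (SG_to SI) (SG_to SJ) H)).
- move=> SI Hc.
  exact: (SG_of (graded_idealC GI GJ) (SGe_C HI HJ (SG_to SI) Hc)).
- move=> k Hk.
  have GX := graded_idealX k GI.
  have HX := proj1 GX.
  have SX := SGe_X HI Hk.
  split.
  + exact: (SG_of GX SX).
  + have GL := embedded_graded GX.
    exact: (SG_of (Sat_graded GX GL) (Sat_SGe HX (proj1 GL) SX)).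
  + have GL := @max_graded K n a.
    exact: (SG_of (Sat_graded GX GL) (Sat_SGe HX (proj1 GL) SX)).
Qed.
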